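(* Let $p$ be a prime. For an integer $r$ with $|r|<2\sqrt p$ define \[ c_{r,p}=\begin{cases} 1/2, &\text{if } r^2-4p=-4\alpha^2 \text{ for some }\alpha\in\mathbb{Z},\\ 2/3, &\text{if } r^2-4p=-3\alpha^2 \text{ for some }\alpha\in\mathbb{Z},\\ 0, &\text{otherwise}. \end{cases} \] Then \[ \sum_{\substack{r\in\mathbb{Z},\ |r|<2\sqrt p,\\ r\equiv 0\pmod 2}}c_{r,p} =\begin{cases} 10/3, & p\equiv 1\pmod{12},\\ 2, & p\equiv 5\pmod{12},\\ 4/3, & p\equiv 7\pmod{12},\\ 0, & p\equiv 11\pmod{12}. \end{cases} \]
   Context: The sum runs over all even integers $r$ (positive, negative and zero) with $|r|<2\sqrt p$. *)

(* Defs.v *)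
From mathcomp Require Import all_boot all_order all_algebra.
From Stdlib Require Import ClassicalEpsilon.
Set Implicit Arguments. Unset Strict Implicit. Unset Printing Implicit Defensive.
Import Order.TTheory GRing.Theory Num.Theory.
Local Open Scope ring_scope.

Definition c_rp (r : int) (p : nat) : rat :=
  if excluded_middle_informative
       (exists a : int, r ^+ 2 - 4 * p%:Z = - 4 * a ^+ 2)
  then 1 / 2
  else if excluded_middle_informative
       (exists a : int, r ^+ 2 - 4 * p%:Z = - 3 * a ^+ 2)
  then 2 / 3
  else 0.

(* The integers -2p, ..., 2p (each once); every integer r with
   |r| < 2 sqrt p lies in this range. *)
Definition int_window (p : nat) : seq int :=
  [seq (i%:Z - (2 * p)%:Z) | i <- iota 0 (4 * p).+1].

(* |r| < 2 sqrt p  <=>  r^2 < 4p  for integers r. *)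
Definition in_hasse (r : int) (p : nat) : bool := r ^+ 2 < 4 * p%:Z.

Definition sum_even_c (p : nat) : rat :=
  \sum_(r <- int_window p | in_hasse r p && (2 %| r)%Z) c_rp r p.

(* Main.v *)
Require Import Defs.
From mathcomp Require Import all_boot all_order all_algebra all_field.
From mathcomp Require Import zify ring lra.
From Stdlib Require Import Classical ClassicalEpsilon.
Import Order.TTheory GRing.Theory Num.Theory.
Local Open Scope ring_scope.

Lemma exists_nonroot (p n : nat) : prime p -> (0 < n < p.-1)%N ->
  exists x : 'F_p, x != 0 /\ x ^+ n != 1.
Proof.
move=> pr /andP[n0 np].
apply: NNPP => H.
have Hall : all n.-unity_root (enum [pred x : 'F_p | x != 0]).
  apply/allP => x; rewrite mem_enum inE => x0; rewrite unity_rootE.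
  by apply/negPn/negP => hx; apply: H; exists x.
have := max_unity_roots n0 Hall (enum_uniq _).
rewrite -cardE cardC1 card_Fp //.
by move=> /(leq_ltn_trans) /(_ np); rewrite ltnn.
Qed.

Lemma fermat (p : nat) (x : 'F_p) : prime p -> x != 0 -> x ^+ p.-1 = 1.
Proof.
move=> pr x0; have := expf_card x; rewrite card_Fp // => h.
have h' : x ^+ p.-1 * x = 1 * x by rewrite -exprSr prednK ?prime_gt0 // h mul1r.
exact: (mulIf x0 h').
Qed.

Lemma Fp_dvd (p m : nat) : prime p -> (m%:R : 'F_p) = 0 -> (p %| m)%N.
Proof. by move=> pr h; rewrite (dvdn_pcharf (pchar_Fp pr)) h. Qed.

Lemma sqrt_m1 (p : nat) : prime p -> (p %% 4 = 1)%N -> exists m : nat, (p %| m ^ 2 + 1)%N.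
Proof.
move=> pr p4.
have p5 : (5 <= p)%N.
  have := prime_gt1 pr; case: p pr p4 => [|[|[|[|[|p]]]]] //.
have [x [x0 xn]] := @exists_nonroot p (p.-1 %/ 2)%N pr ltac:(lia).
have h1 : (x ^+ (p.-1 %/ 2)) ^+ 2 = 1.
  by rewrite -exprM divnK ?fermat //; apply/dvdnP; exists (p %/ 4 * 2)%N; lia.
have h2 : x ^+ (p.-1 %/ 2) = -1.
  by move: h1 => /eqP; rewrite sqrf_eq1 (negbTE xn) /= => /eqP.
set y := x ^+ (p.-1 %/ 4).
have hy : y ^+ 2 = -1.
  rewrite -h2 /y -exprM; congr (_ ^+ _); lia.
exists (nat_of_ord y). apply: (@Fp_dvd p). exact: pr.
by rewrite natrD natrX natr_Zp hy addNr.
Qed.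

Lemma sqrt_m3 (p : nat) : prime p -> (p %% 3 = 1)%N -> exists m : nat, (p %| m ^ 2 + 3)%N.
Proof.
move=> pr p3.
have p7 : (7 <= p)%N.
  have := prime_gt1 pr; case: p pr p3 => [|[|[|[|[|[|[|p]]]]]]] //.
have [x [x0 xn]] := @exists_nonroot p (p.-1 %/ 3)%N pr ltac:(lia).
set w := x ^+ (p.-1 %/ 3).
have h1 : w ^+ 3 = 1.
  by rewrite /w -exprM divnK ?fermat //; apply/dvdnP; exists (p %/ 3)%N; lia.
have h2 : w ^+ 2 + w + 1 = 0.
  have : (w - 1) * (w ^+ 2 + w + 1) = 0.
    have -> : (w - 1) * (w ^+ 2 + w + 1) = w ^+ 3 - 1 by ring.
    by rewrite h1 subrr.
  by move/eqP; rewrite mulf_eq0 subr_eq0 (negbTE xn) /= => /eqP.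
set y := 2 * w + 1.
have hy : y ^+ 2 + 3 = 0.
  have -> : y ^+ 2 + 3 = 4 * (w ^+ 2 + w + 1) by rewrite /y; ring.
  by rewrite h2 mulr0.
exists (nat_of_ord y). apply: (@Fp_dvd p). exact: pr.
by rewrite natrD natrX natr_Zp hy.
Qed.

Lemma isqrt_ex (n : nat) : exists k : nat, (k * k <= n < k.+1 * k.+1)%N.
Proof.
elim: n => [|n [k hk]]; first by exists 0%N.
case: (ltnP n.+1 (k.+1 * k.+1)) => h.
  by exists k; lia.
by exists k.+1; lia.
Qed.

Lemma thue (p m : nat) : prime p -> exists u v : int,
  [/\ (u != 0) || (v != 0), u ^+ 2 < p%:Z, v ^+ 2 < p%:Z & (p%:Z %| u + m%:Z * v)%Z].
Proof.
move=> pr; have p0 := prime_gt0 pr.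
have [k hk] := isqrt_ex p.
have kp : (k * k < p)%N.
  rewrite ltn_neqAle; case/andP: hk => -> _; rewrite andbT.
  apply/eqP => e; have : (k %| p)%N by rewrite -e dvdn_mulr.
  case/primeP: pr => p1 /(_ k) h /h /orP[] /eqP ek; subst k; nia.
pose f := fun ij : 'I_k.+1 * 'I_k.+1 =>
  Ordinal (ltn_pmod (ij.1 + m * ij.2)%N p0).
have : ~ injective f.
  move=> /leq_card; rewrite card_prod !card_ord; lia.
move=> ninj; apply: NNPP => H; apply: ninj => a b e.
apply: NNPP => nab; apply: H.
exists (a.1%:Z - b.1%:Z), (a.2%:Z - b.2%:Z).
have e' : ((a.1 + m * a.2) %% p = (b.1 + m * b.2) %% p)%N by move: e => /(congr1 val).
move: (ltn_ord a.1) (ltn_ord a.2) (ltn_ord b.1) (ltn_ord b.2) => a1 a2 b1 b2.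
split.
- apply/negPn/negP => /norP[/negPn/eqP h1 /negPn/eqP h2]; apply: nab.
  case: a b {e e'} a1 a2 b1 b2 h1 h2 => [a1 a2] [b1 b2] /= *.
  by congr pair; apply: val_inj => /=; lia.
- nia.
- nia.
- have : ((a.1 + m * a.2)%N%:Z == (b.1 + m * b.2)%N%:Z %[mod p%:Z])%Z.
    by rewrite !modz_nat e'.
  rewrite eqz_mod_dvd; congr (_ %| _)%Z; lia.
Qed.

Lemma sq_pos {u : int} : u != 0 -> 0 < u ^+ 2.
Proof. by move=> h; rewrite lt0r sqrf_eq0 h sqr_ge0. Qed.

Lemma two_sq_ex p : prime p -> (p %% 4 = 1)%N -> exists a b : nat, (a ^ 2 + b ^ 2 = p)%N.
Proof.
move=> pr p4; have [m /dvdnP [s hs]] := @sqrt_m1 p pr p4.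
have [u [v [nz hu hv /dvdzP [t ht]]]] := @thue p m pr.
have hq : u ^+ 2 + v ^+ 2 = p%:Z * (p%:Z * t ^+ 2 - 2 * t * m%:Z * v + s%:Z * v ^+ 2).
  have hu' : u = t * p%:Z - m%:Z * v by rewrite -ht; ring.
  have hs' : m%:Z ^+ 2 + 1 = s%:Z * p%:Z by nia.
  rewrite hu'. 
  have -> : (t * p%:Z - m%:Z * v) ^+ 2 + v ^+ 2 = t^+2 * p%:Z^+2 - 2 * t * p%:Z * m%:Z * v + v ^+ 2 * (m%:Z ^+ 2 + 1) by ring.
  rewrite hs'; ring.
set q := (_ - _ + _) in hq.
have p1 := prime_gt1 pr.
have q1 : q = 1.
  have pos : 0 < u ^+ 2 + v ^+ 2.
    case/orP: nz => h; [have := sq_pos h | have := sq_pos h]; have := sqr_ge0 u; have := sqr_ge0 v; lia.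
  have Slt : u ^+ 2 + v ^+ 2 < 2 * p%:Z by lia.
  move: pos Slt; rewrite hq; clearbody q; clear -p1 => h1 h2.
  have pz : 0 < p%:Z by lia.
  nia.
exists (absz u), (absz v).
rewrite q1 mulr1 in hq; clear -hq; nia.
Qed.

Lemma three_sq_ex p : prime p -> (p %% 3 = 1)%N -> exists a b : nat, (a ^ 2 + 3 * b ^ 2 = p)%N.
Proof.
move=> pr p3; have [m /dvdnP [s hs]] := @sqrt_m3 p pr p3.
have [u [v [nz hu hv /dvdzP [t ht]]]] := @thue p m pr.
have hq : u ^+ 2 + 3 * v ^+ 2 = p%:Z * (p%:Z * t ^+ 2 - 2 * t * m%:Z * v + s%:Z * v ^+ 2).
  have hu' : u = t * p%:Z - m%:Z * v by rewrite -ht; ring.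
  have hs' : m%:Z ^+ 2 + 3 = s%:Z * p%:Z by nia.
  rewrite hu'. 
  have -> : (t * p%:Z - m%:Z * v) ^+ 2 + 3 * v ^+ 2 = t^+2 * p%:Z^+2 - 2 * t * p%:Z * m%:Z * v + v ^+ 2 * (m%:Z ^+ 2 + 3) by ring.
  rewrite hs'; ring.
set q := (_ - _ + _) in hq.
have p1 := prime_gt1 pr.
have p7 : (7 <= p)%N.
  have := prime_gt1 pr; case: p pr p3 {hs hq hu hv ht q p1} => [|[|[|[|[|[|[|p]]]]]]] //.
have pos : 0 < u ^+ 2 + 3 * v ^+ 2.
  case/orP: nz => h; [have := sq_pos h | have := sq_pos h]; have := sqr_ge0 u; have := sqr_ge0 v; lia.
have Slt : u ^+ 2 + 3 * v ^+ 2 < 4 * p%:Z by lia.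
have qb : 0 < q < 4.
  move: pos Slt; rewrite hq; clearbody q; clear -p1 => h1 h2.
  have pz : 0 < p%:Z by lia.
  apply/andP; split; nia.
clearbody q; have [n qn] : exists n : nat, q = n%:Z by exists (absz q); lia.
subst q.
have hq' : ((absz u) ^ 2 + 3 * (absz v) ^ 2 = p * n)%N by clear -hq; nia.
have : (n = 1 \/ n = 2 \/ n = 3)%N by lia.
move: hq' {hq pos Slt qb}; set a := absz u; set b := absz v.
move=> hq [q1|[q2|q3]].
- by exists a, b; rewrite hq q1 muln1.
- exfalso.
  have ha := odd_double_half a; have hb := odd_double_half b.
  have hp := odd_double_half p.
  have op : odd p.
    by case: (even_prime pr) p7 => [->|].
  rewrite -ha -hb -hp q2 op in hq; move: hq; clear.
  case: (odd a); case: (odd b) => /=; rewrite -!muln2; nia.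
- have h3 : (3 %| a)%N.
    have : (3 %| a * a)%N.
      apply/dvdnP; exists (p - b ^ 2)%N; rewrite q3 in hq; move: hq; clear; nia.
    by rewrite Euclid_dvdM // orbb.
  case/dvdnP: h3 => c hc.
  exists b, c; rewrite q3 hc in hq; move: hq; clear; nia.
Qed.


Lemma nosq (p k : nat) : prime p -> (k * k != p)%N.
Proof.
move=> pr; apply/eqP => e; have : (k %| p)%N by rewrite -e dvdn_mulr.
have p1 := prime_gt1 pr.
case/primeP: pr => _ /(_ k) h /h /orP[] /eqP ek; subst k; nia.
Qed.

Lemma mult_p_eq (p n : nat) : (p %| n)%N -> (0 < n)%N -> (n <= p)%N -> n = p.
Proof. by case/dvdnP => k ->; case: k => [|[|k]] //=; nia. Qed.

Lemma two_sq_uniq (p a b c d : nat) : prime p ->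
  (a ^ 2 + b ^ 2 = p)%N -> (c ^ 2 + d ^ 2 = p)%N ->
  (c = a /\ d = b) \/ (c = b /\ d = a).
Proof.
move=> pr hab hcd.
have nz : forall x y : nat, (x ^ 2 + y ^ 2 = p)%N -> (0 < x)%N /\ (0 < y)%N.
  move=> x y h; split; rewrite lt0n; apply/eqP => e; rewrite e in h;
  [have := nosq p y pr | have := nosq p x pr]; move/eqP; lia.
have [a0 b0] := nz _ _ hab; have [c0 d0] := nz _ _ hcd.
have key : ((a * c + b * d) * (a * d + b * c) = p * (c * d + a * b))%N.
  move: hab hcd; clear; nia.
have id1 : ((a * c + b * d)%:Z ^+ 2 + ((a * d)%:Z - (b * c)%:Z) ^+ 2 = p%:Z ^+ 2).
  have -> : p%:Z ^+ 2 = (a%:Z ^+ 2 + b%:Z ^+ 2) * (c%:Z ^+ 2 + d%:Z ^+ 2) by move: hab hcd; clear; nia.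
  rewrite !PoszD !PoszM; ring.
have id2 : ((a * d + b * c)%:Z ^+ 2 + ((a * c)%:Z - (b * d)%:Z) ^+ 2 = p%:Z ^+ 2).
  have -> : p%:Z ^+ 2 = (a%:Z ^+ 2 + b%:Z ^+ 2) * (c%:Z ^+ 2 + d%:Z ^+ 2) by move: hab hcd; clear; nia.
  rewrite !PoszD !PoszM; ring.
have : (p %| (a * c + b * d) * (a * d + b * c))%N by rewrite key dvdn_mulr.
rewrite Euclid_dvdM // => /orP[] hd.
- have e1 : (a * c + b * d = p)%N.
    apply: mult_p_eq => //; first by rewrite addn_gt0 muln_gt0 a0 c0.
    have := sqr_ge0 ((a * d)%:Z - (b * c)%:Z); move: id1; clear; nia.
  have e2 : (a * d)%:Z = (b * c)%:Z.
    have := sqr_ge0 ((a * d)%:Z - (b * c)%:Z).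
    move: id1; rewrite e1; clear; move=> h1 h2.
    have : ((a * d)%:Z - (b * c)%:Z) ^+ 2 = 0 by lia.
    by move/eqP; rewrite sqrf_eq0 subr_eq0 => /eqP.
  have e3 : (a * d = b * c)%N by case: e2.
  have e4 : (a ^ 2 * p = c ^ 2 * p)%N.
    rewrite -{1}hcd -hab; move: e3; clear; nia.
  have e5 : (a ^ 2 = c ^ 2)%N by apply/eqP; rewrite -(eqn_pmul2r (prime_gt0 pr)) e4.
  have e6 : a = c by apply/eqP; rewrite -(eqn_exp2r _ _ (isT : (0 < 2)%N)) e5.
  left; split => //; subst c.
  have e7 : (b ^ 2 = d ^ 2)%N by move: hab hcd; clear; lia.
  by apply/eqP; rewrite eq_sym -(eqn_exp2r _ _ (isT : (0 < 2)%N)) e7.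
- have e1 : (a * d + b * c = p)%N.
    apply: mult_p_eq => //; first by rewrite addn_gt0 muln_gt0 a0 d0.
    have := sqr_ge0 ((a * c)%:Z - (b * d)%:Z); move: id2; clear; nia.
  have e2 : (a * c)%:Z = (b * d)%:Z.
    have := sqr_ge0 ((a * c)%:Z - (b * d)%:Z).
    move: id2; rewrite e1; clear; move=> h1 h2.
    have : ((a * c)%:Z - (b * d)%:Z) ^+ 2 = 0 by lia.
    by move/eqP; rewrite sqrf_eq0 subr_eq0 => /eqP.
  have e3 : (a * c = b * d)%N by case: e2.
  have e4 : (a ^ 2 * p = d ^ 2 * p)%N.
    rewrite -{1}hcd -hab; move: e3; clear; nia.
  have e5 : (a ^ 2 = d ^ 2)%N by apply/eqP; rewrite -(eqn_pmul2r (prime_gt0 pr)) e4.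
  have e6 : a = d by apply/eqP; rewrite -(eqn_exp2r _ _ (isT : (0 < 2)%N)) e5.
  right; split => //; subst d.
  have e7 : (b ^ 2 = c ^ 2)%N by move: hab hcd; clear; lia.
  by apply/eqP; rewrite eq_sym -(eqn_exp2r _ _ (isT : (0 < 2)%N)) e7.
Qed.

Lemma three_sq_uniq (p x y u v : nat) : prime p -> p != 3%N ->
  (x ^ 2 + 3 * y ^ 2 = p)%N -> (u ^ 2 + 3 * v ^ 2 = p)%N -> x = u /\ y = v.
Proof.
move=> pr p3 hxy huv.
have nz : forall a b : nat, (a ^ 2 + 3 * b ^ 2 = p)%N -> (0 < a)%N /\ (0 < b)%N.
  move=> a b h; split; rewrite lt0n; apply/eqP => e; rewrite e in h.
    have : (3 %| p)%N by rewrite -h; apply/dvdnP; exists (b ^ 2)%N; lia.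
    by rewrite dvdn_prime2 // => /eqP e3; move: p3; rewrite -e3.
  by have := nosq p a pr; move/eqP; lia.
have [x0 y0] := nz _ _ hxy; have [u0 v0] := nz _ _ huv.
have p0 := prime_gt0 pr.
have key : ((x * u + 3 * y * v) * (x * v + y * u) = p * (u * v + x * y))%N.
  move: hxy huv; clear; nia.
have id1 : ((x * u + 3 * y * v)%:Z ^+ 2 + 3 * ((x * v)%:Z - (y * u)%:Z) ^+ 2 = p%:Z ^+ 2).
  have -> : p%:Z ^+ 2 = (x%:Z ^+ 2 + 3 * y%:Z ^+ 2) * (u%:Z ^+ 2 + 3 * v%:Z ^+ 2)
    by move: hxy huv; clear; nia.
  rewrite !PoszD !PoszM; ring.
have id2 : (3 * (x * v + y * u)%:Z ^+ 2 + ((x * u)%:Z - 3 * (y * v)%:Z) ^+ 2 = p%:Z ^+ 2).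
  have -> : p%:Z ^+ 2 = (x%:Z ^+ 2 + 3 * y%:Z ^+ 2) * (u%:Z ^+ 2 + 3 * v%:Z ^+ 2)
    by move: hxy huv; clear; nia.
  rewrite !PoszD !PoszM; ring.
have : (p %| (x * u + 3 * y * v) * (x * v + y * u))%N by rewrite key dvdn_mulr.
rewrite Euclid_dvdM // => /orP[] hd.
- have e1 : (x * u + 3 * y * v = p)%N.
    apply: mult_p_eq => //; first by rewrite addn_gt0 muln_gt0 x0 u0.
    have := sqr_ge0 ((x * v)%:Z - (y * u)%:Z); move: id1; clear; nia.
  have e2 : (x * v)%:Z = (y * u)%:Z.
    have := sqr_ge0 ((x * v)%:Z - (y * u)%:Z).
    move: id1; rewrite e1; clear; move=> h1 h2.
    have : ((x * v)%:Z - (y * u)%:Z) ^+ 2 = 0 by lia.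
    by move/eqP; rewrite sqrf_eq0 subr_eq0 => /eqP.
  have e3 : (x * v = y * u)%N by case: e2.
  have e4 : (x ^ 2 * p = u ^ 2 * p)%N.
    rewrite -{1}huv -hxy; move: e3; clear; nia.
  have e5 : (x ^ 2 = u ^ 2)%N by apply/eqP; rewrite -(eqn_pmul2r (prime_gt0 pr)) e4.
  have e6 : x = u by apply/eqP; rewrite -(eqn_exp2r _ _ (isT : (0 < 2)%N)) e5.
  split => //; subst u.
  have e7 : (y ^ 2 = v ^ 2)%N by move: hxy huv; clear; lia.
  by apply/eqP; rewrite -(eqn_exp2r _ _ (isT : (0 < 2)%N)) e7.
- exfalso.
  have e1 : (x * v + y * u = p)%N.
    apply: mult_p_eq => //; first by rewrite addn_gt0 muln_gt0 x0 v0.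
    have := sqr_ge0 ((x * u)%:Z - 3 * (y * v)%:Z); move: id2; clear; nia.
  move: id2; rewrite e1 => h.
  have := sqr_ge0 ((x * u)%:Z - 3 * (y * v)%:Z); move: h p0; clear; nia.
Qed.


Definition P4 (r : int) (p : nat) := exists a : int, r ^+ 2 - 4 * p%:Z = - 4 * a ^+ 2.
Definition P3 (r : int) (p : nat) := exists a : int, r ^+ 2 - 4 * p%:Z = - 3 * a ^+ 2.
Definition Q (p : nat) (r : int) : bool := in_hasse r p && (2 %| r)%Z.

Lemma no43 (a b : nat) : (4 * a ^ 2 = 3 * b ^ 2)%N -> a = 0%N.
Proof.
move=> h; apply/eqP; apply/negPn/negP => a0.
have b0 : (0 < b)%N.
  rewrite lt0n; apply/eqP => b0; move: h a0; rewrite b0; clear; nia.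
have := congr1 (logn 3) h.
rewrite !lognM ?expn_gt0 ?lt0n ?a0 -?lt0n ?b0 //.
have -> : logn 3 4 = 0%N by [].
have -> : logn 3 3 = 1%N by [].
lia.
Qed.

Lemma disj r p : in_hasse r p -> P4 r p -> P3 r p -> False.
Proof.
rewrite /in_hasse => hh [a ha] [b hb].
have : (4 * (absz a) ^ 2 = 3 * (absz b) ^ 2)%N by move: ha hb; clear; nia.
move/no43 => a0.
have : a = 0 by lia.
move=> a0'; rewrite a0' in ha; move: ha hh; clear; lia.
Qed.

Lemma count_sum (w A : seq int) (q : pred int) : uniq w -> uniq A ->
  (forall r, r \in A -> q r && (r \in w)) ->
  \sum_(r <- w | q r) ((r \in A) : nat)%:R = (size A)%:R :> rat.
Proof.
move=> uw uA hA; rewrite -natr_sum; congr (_ %:R).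
rewrite (eq_bigr (fun r => if r \in A then 1%N else 0%N)); last by move=> r _; case: (r \in A).
rewrite -big_mkcondr sum1_count -size_filter.
apply: perm_size; apply: uniq_perm; first exact: filter_uniq.
  exact: uA.
move=> r; rewrite mem_filter; apply/idP/idP.
  by case/andP=> /andP[].
by move=> h; rewrite h; have := hA r h; case/andP=> -> ->.
Qed.

Lemma window_mem r p : in_hasse r p -> r \in int_window p.
Proof.
rewrite /in_hasse /int_window => h; apply/mapP.
exists (absz (r + (2 * p)%N%:Z)).
  rewrite mem_iota /=; nia.
nia.
Qed.

Lemma window_uniq p : uniq (int_window p).
Proof.
rewrite map_inj_uniq ?iota_uniq // => i j /eqP; rewrite subr_eq addrNK => /eqP.
by case.
Qed.

Lemma sum_char p (A4 A3 : seq int) : uniq A4 -> uniq A3 ->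
  (forall r, Q p r -> P4 r p <-> r \in A4) ->
  (forall r, Q p r -> P3 r p <-> r \in A3) ->
  (forall r, r \in A4 -> Q p r) -> (forall r, r \in A3 -> Q p r) ->
  sum_even_c p = (size A4)%:R / 2 + (size A3)%:R * (2 / 3).
Proof.
move=> u4 u3 h4 h3 q4 q3.
rewrite /sum_even_c.
rewrite (eq_bigr (fun r => ((r \in A4) : nat)%:R / 2 + ((r \in A3) : nat)%:R * (2 / 3))).
  rewrite big_split /= -!mulr_suml.
  have m4 : forall r, r \in A4 -> Q p r && (r \in int_window p).
    by move=> r hr; have := q4 r hr; rewrite /Q => /andP[hh ->]; rewrite hh window_mem.
  have m3 : forall r, r \in A3 -> Q p r && (r \in int_window p).
    by move=> r hr; have := q3 r hr; rewrite /Q => /andP[hh ->]; rewrite hh window_mem.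
  by rewrite (count_sum _ _ (Q p) (window_uniq p) u4 m4) (count_sum _ _ (Q p) (window_uniq p) u3 m3).
move=> r hq; rewrite /c_rp.
case: excluded_middle_informative => e4.
  have -> : r \in A4 by apply/(h4 r hq).
  have -> : r \in A3 = false.
    apply/negP => /(h3 r hq) e3; case/andP: hq => hh _; exact (@disj r p hh e4 e3).
  by rewrite /=; ring.
case: excluded_middle_informative => e3.
  have -> : r \in A3 by apply/(h3 r hq).
  have -> : r \in A4 = false by apply/negP => /(h4 r hq).
  by rewrite /=; ring.
have -> : r \in A3 = false by apply/negP => /(h3 r hq).
have -> : r \in A4 = false by apply/negP => /(h4 r hq).
by rewrite /=; ring.
Qed.


Lemma L4 (r : int) p : (2 %| r)%Z -> P4 r p ->
  exists s t : nat, (r = 2 * s%:Z \/ r = - (2 * s%:Z)) /\ (s ^ 2 + t ^ 2 = p)%N.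
Proof.
case/dvdzP => k -> [a ha]; exists (absz k), (absz a); split; first lia.
move: ha; clear; nia.
Qed.

Lemma L3 (r : int) p : (2 %| r)%Z -> P3 r p ->
  exists s t : nat, (r = 2 * s%:Z \/ r = - (2 * s%:Z)) /\ (s ^ 2 + 3 * t ^ 2 = p)%N.
Proof.
case/dvdzP => k -> [a ha].
have hn : (4 * (absz k) ^ 2 + 3 * (absz a) ^ 2 = 4 * p)%N by move: ha; clear; nia.
have := odd_double_half (absz a); set h := (absz a)./2; case: (odd (absz a)) => /= e.
  exfalso; rewrite -e in hn; move: hn; clear; rewrite -muln2; nia.
exists (absz k), h; split; first lia.
rewrite -e in hn; move: hn; clear; rewrite -muln2; nia.
Qed.


Definition A4l (a b : nat) : seq int := [:: 2 * a%:Z; - (2 * a%:Z); 2 * b%:Z; - (2 * b%:Z)].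
Definition A3l (x : nat) : seq int := [:: 2 * x%:Z; - (2 * x%:Z)].

Lemma uniq4 a b : (0 < a)%N -> (0 < b)%N -> a != b -> uniq (A4l a b).
Proof. move=> a0 b0 ab; rewrite /A4l /= !inE; lia. Qed.

Lemma uniq3 x : (0 < x)%N -> uniq (A3l x).
Proof. move=> x0; rewrite /A3l /= !inE; lia. Qed.

Lemma q4 p a b : (a ^ 2 + b ^ 2 = p)%N -> (0 < a)%N -> (0 < b)%N ->
  forall r, r \in A4l a b -> Q p r.
Proof.
move=> h a0 b0 r; rewrite /A4l !inE /Q /in_hasse.
case/orP => [/eqP->|/orP[/eqP->|/orP[/eqP->|/eqP->]]]; apply/andP; split;
  move: h a0 b0; clear; nia.
Qed.

Lemma q3 p x y : (x ^ 2 + 3 * y ^ 2 = p)%N -> (0 < y)%N ->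
  forall r, r \in A3l x -> Q p r.
Proof.
move=> h y0 r; rewrite /A3l !inE /Q /in_hasse.
case/orP => [/eqP->|/eqP->]; apply/andP; split;
  move: h y0; clear; nia.
Qed.

Lemma char4 p a b : prime p -> (a ^ 2 + b ^ 2 = p)%N ->
  forall r, Q p r -> P4 r p <-> r \in A4l a b.
Proof.
move=> pr h r /andP[_ hd]; split.
  move=> hp; have [s [t [hr hst]]] := @L4 r p hd hp.
  have := @two_sq_uniq p a b s t pr h hst; rewrite /A4l !inE.
  case=> [[e1 e2]|[e1 e2]]; rewrite e1 in hr; lia.
rewrite /A4l !inE.
case/orP => [/eqP->|/orP[/eqP->|/orP[/eqP->|/eqP->]]];
  [exists b%:Z|exists b%:Z|exists a%:Z|exists a%:Z]; move: h; clear; nia.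
Qed.

Lemma char3 p x y : prime p -> p != 3%N -> (x ^ 2 + 3 * y ^ 2 = p)%N ->
  forall r, Q p r -> P3 r p <-> r \in A3l x.
Proof.
move=> pr p3 h r /andP[_ hd]; split.
  move=> hp; have [s [t [hr hst]]] := @L3 r p hd hp.
  have [e1 e2] := @three_sq_uniq p s t x y pr p3 hst h; rewrite /A3l !inE.
  rewrite e1 in hr; lia.
rewrite /A3l !inE.
case/orP => [/eqP->|/eqP->]; exists (2 * y%:Z); move: h; clear; nia.
Qed.

Lemma char4_empty p : (p %% 4 = 3)%N ->
  forall r, Q p r -> P4 r p <-> r \in [::].
Proof.
move=> p4 r /andP[_ hd]; split => //.
move=> hp; have [s [t [hr hst]]] := @L4 r p hd hp.
exfalso.
have hs := odd_double_half s; have ht := odd_double_half t.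
move: hst p4; rewrite -hs -ht; case: (odd s); case: (odd t); rewrite /= -!muln2; clear; nia.
Qed.

Lemma char3_empty p : (p %% 3 = 2)%N ->
  forall r, Q p r -> P3 r p <-> r \in [::].
Proof.
move=> p3 r /andP[_ hd]; split => //.
move=> hp; have [s [t [hr hst]]] := @L3 r p hd hp.
exfalso.
have hs := divn_eq s 3; have hm := ltn_pmod s (isT : (0 < 3)%N).
move: hst p3 hs hm; set q := (s %/ 3)%N; case: (s %% 3)%N => [|[|[|k]]] hst p3 hs hm //;
  rewrite hs in hst; move: hst p3; clear; nia.
Qed.


Lemma pos2 p a b : prime p -> (p %% 4 = 1)%N -> (a ^ 2 + b ^ 2 = p)%N ->
  [/\ (0 < a)%N, (0 < b)%N & a != b].
Proof.
move=> pr p4 h; have := nosq p a pr; have := nosq p b pr.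
move: h p4; clear; move=> h p4 n1 n2.
split.
- rewrite lt0n; apply/eqP => e; rewrite e in h; move: n1; rewrite -h; lia.
- rewrite lt0n; apply/eqP => e; rewrite e in h; move: n2; rewrite -h; lia.
- apply/eqP => e; rewrite e in h; rewrite -h in p4; move: p4; lia.
Qed.

Lemma pos3 p x y : prime p -> (x ^ 2 + 3 * y ^ 2 = p)%N -> (0 < y)%N.
Proof.
move=> pr h; have := nosq p x pr.
rewrite lt0n; move=> n1; apply/eqP => e; rewrite e in h; move: n1; rewrite -h; lia.
Qed.

Theorem proposition10 (p : nat) (hp : prime p) :
  [/\ (p %% 12 = 1)%N -> sum_even_c p = 10 / 3,
      (p %% 12 = 5)%N -> sum_even_c p = 2,
      (p %% 12 = 7)%N -> sum_even_c p = 4 / 3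
    & (p %% 12 = 11)%N -> sum_even_c p = 0].
Proof.
split => hm.
- have p4 : (p %% 4 = 1)%N by lia.
  have p3 : (p %% 3 = 1)%N by lia.
  have p3' : p != 3%N by apply/eqP => e; rewrite e in hm.
  have [a [b hab]] := @two_sq_ex p hp p4.
  have [x [y hxy]] := @three_sq_ex p hp p3.
  have [a0 b0 ab] := @pos2 p a b hp p4 hab.
  have y0 := @pos3 p x y hp hxy.
  rewrite (@sum_char p (A4l a b) (A3l x) (@uniq4 a b a0 b0 ab) (@uniq3 x _)
     (@char4 p a b hp hab) (@char3 p x y hp p3' hxy) (@q4 p a b hab a0 b0) (@q3 p x y hxy y0)) /=.
  + lra.
  + rewrite lt0n; apply/eqP => e; rewrite e in hxy.
    have : (3 %| p)%N by rewrite -hxy; apply/dvdnP; exists (y ^ 2)%N; lia.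
    by rewrite dvdn_prime2 // => /eqP e3; move: p3'; rewrite -e3.
- have p4 : (p %% 4 = 1)%N by lia.
  have p3 : (p %% 3 = 2)%N by lia.
  have [a [b hab]] := @two_sq_ex p hp p4.
  have [a0 b0 ab] := @pos2 p a b hp p4 hab.
  rewrite (@sum_char p (A4l a b) [::] (@uniq4 a b a0 b0 ab) isT
     (@char4 p a b hp hab) (@char3_empty p p3) (@q4 p a b hab a0 b0)) /=.
  + lra.
  + by [].
- have p4 : (p %% 4 = 3)%N by lia.
  have p3 : (p %% 3 = 1)%N by lia.
  have p3' : p != 3%N by apply/eqP => e; rewrite e in hm.
  have [x [y hxy]] := @three_sq_ex p hp p3.
  have y0 := @pos3 p x y hp hxy.
  rewrite (@sum_char p [::] (A3l x) isT (@uniq3 x _)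
     (@char4_empty p p4) (@char3 p x y hp p3' hxy) _ (@q3 p x y hxy y0)) /=.
  1: lra.
  all: try by [].
  rewrite lt0n; apply/eqP => e; rewrite e in hxy.
    have : (3 %| p)%N by rewrite -hxy; apply/dvdnP; exists (y ^ 2)%N; lia.
    by rewrite dvdn_prime2 // => /eqP e3; move: p3'; rewrite -e3.
- have p4 : (p %% 4 = 3)%N by lia.
  have p3 : (p %% 3 = 2)%N by lia.
  rewrite (@sum_char p [::] [::] isT isT
     (@char4_empty p p4) (@char3_empty p p3)) /=.
  1: lra.
  all: try by [].
Qed.
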